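(* Let $G$ be a cubic graph that has a light Xuong tree, and let $G'$ be obtained from $G$ by a diamond insertion into an edge. Then $G'$ also has a light Xuong tree.
   Context: Graphs are finite; multiple edges allowed; a cubic graph is $3$-regular. For connected $G$, $\beta(G)=|E(G)|-|V(G)|+1$, $\gamma_M(G)$ is the largest genus of a closed orientable surface on which $G$ has a cellular embedding, and $\xi(G)=\beta(G)-2\gamma_M(G)$. For a spanning tree $T$ the cotree is $G-E(T)$; a cotree component is odd if it has an odd number of edges; $T$ is a Xuong tree if its cotree has exactly $\xi(G)$ odd components. A Xuong tree is light if its cotree has exactly one odd component and that component consists of a single edge. A diamond is $K_4$ minus an edge; its two $2$-valent vertices are its ends. Inserting a diamond into an edge $e=uv$: replace $e$ by a path $uu'v'v$ and replace the inner edge $u'v'$ by a diamond whose two $2$-valent vertices are $u'$ and $v'$ (so $u'$ and $v'$ are both adjacent to two new adjacent vertices $s,t$). *)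

(* Defs.v *)
(* Finite multigraphs (loopless, multiple edges allowed)
   given by a finite vertex type V, a finite edge type E and an
   endpoint map ends : E -> V * V (edge orientation is irrelevant). *)
From HB Require Import structures.
From mathcomp Require Import all_boot fingroup perm.
Set Implicit Arguments. Unset Strict Implicit. Unset Printing Implicit Defensive.

Section MGraph.
Variables (V E : finType) (ends : E -> V * V).

Definition loopless := forall e, (ends e).1 != (ends e).2.

(* darts = half-edges (e, b); tail of a dart *)
Definition tail (d : E * bool) : V := if d.2 then (ends d.1).1 else (ends d.1).2.
Definition flip (d : E * bool) : E * bool := (d.1, ~~ d.2).

Definition degree (v : V) := #|[set d : E * bool | tail d == v]|.
Definition cubic := forall v, degree v = 3.

Definition adj (S : {set E}) : rel V :=
  fun x y => [exists f in S, (ends f == (x, y)) || (ends f == (y, x))].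
Definition connected_on (S : {set E}) := forall x y, connect (adj S) x y.

(* spanning tree: a connected spanning subgraph that is acyclic, i.e. no
   edge of T lies on a cycle of T (each edge of T is a bridge of T) *)
Definition spanning_tree (T : {set E}) :=
  connected_on T /\
  forall f, f \in T -> ~~ connect (adj (T :\ f)) (ends f).1 (ends f).2.

Definition comps (S : {set E}) : {set {set V}} :=
  [set [set y | connect (adj S) x y] | x : V].
Definition comp_edges (S : {set E}) (C : {set V}) := [set f in S | (ends f).1 \in C].
Definition odd_comps (T : {set E}) :=
  [set C in comps (~: T) | odd #|comp_edges (~: T) C|].

(* Cellular embeddings in closed orientable surfaces = rotation systems:
   a permutation r of the darts that cyclically permutes the darts at each
   vertex; faces are the orbits of d |-> r (flip d). *)
Definition rotation_system (r : {perm E * bool}) :=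
  (forall d, tail (r d) = tail d) /\
  (forall d d', tail d = tail d' -> fconnect r d d').
Definition nfaces (r : {perm E * bool}) :=
  fcard (fun d => r (flip d)) [set: E * bool].
(* Euler: |V| - |E| + F = 2 - 2g *)
Definition has_genus (r : {perm E * bool}) (g : nat) :=
  #|V| + nfaces r + 2 * g = #|E| + 2.
Definition max_genus (g : nat) :=
  (exists2 r, rotation_system r & has_genus r g) /\
  (forall r g', rotation_system r -> has_genus r g' -> g' <= g).

(* Xuong tree: #odd cotree components = xi(G) = beta(G) - 2 gamma_M(G),
   with beta(G) = |E| - |V| + 1 *)
Definition xuong_tree (T : {set E}) :=
  spanning_tree T /\
  exists g, max_genus g /\ #|odd_comps T| + 2 * g + #|V| = #|E| + 1.

Definition light_xuong_tree (T : {set E}) :=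
  xuong_tree T /\
  exists C, odd_comps T = [set C] /\ #|comp_edges (~: T) C| = 1.

Definition has_light_xuong_tree := exists T, light_xuong_tree T.

End MGraph.

(* Diamond insertion into the edge e = uv, u = (ends e).1, v = (ends e).2.
   New vertices: u' = 0, v' = 1, s = 2, t = 3; e is deleted and the edges
   uu', v'v, u's, u't, v's, v't, st are added. *)
Section Diamond.
Variables (V E : finType) (ends : E -> V * V) (e : E).

Definition dV := (V + 'I_4)%type.
Definition dE := ({x : E | x != e} + 'I_7)%type.

Definition dnew (k : nat) : dV := inr (@inord 3 k).

Definition dends (x : dE) : dV * dV :=
  match x with
  | inl y => (inl (ends (val y)).1, inl (ends (val y)).2)
  | inr i =>
      let u : dV := inl (ends e).1 in
      let v : dV := inl (ends e).2 in
      match val i with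
      | 0 => (u, dnew 0)
      | 1 => (dnew 1, v)
      | 2 => (dnew 0, dnew 2)
      | 3 => (dnew 0, dnew 3)
      | 4 => (dnew 1, dnew 2)
      | 5 => (dnew 1, dnew 3)
      | _ => (dnew 2, dnew 3)
      end
  end.

End Diamond.

Arguments dends {V E} ends e x.

(* Main.v *)
Require Import Defs.
From HB Require Import structures.
From mathcomp Require Import all_boot fingroup perm zify.
Set Implicit Arguments. Unset Strict Implicit. Unset Printing Implicit Defensive.

Section Gen.
Variables (T1 T2 : finType).

Lemma connect_hom (R1 : rel T1) (R2 : rel T2) (g : T1 -> T2) :
  (forall x y, R1 x y -> connect R2 (g x) (g y)) ->
  forall x y, connect R1 x y -> connect R2 (g x) (g y).
Proof.
move=> H x y /connectP [p Hp ->]; elim: p x Hp => [|z p IH] x /=.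
  by rewrite connect0.
by case/andP=> h1 h2; apply: connect_trans (H _ _ h1) (IH _ h2).
Qed.

Lemma connect_inv (R : rel T1) (P : pred T1) :
  (forall x y, P x -> R x y -> P y) -> forall x y, P x -> connect R x y -> P y.
Proof.
move=> H x y Px /connectP [p Hp ->]; elim: p x Px Hp => [|z p IH] x Px //=.
case/andP=> h1 h2; exact: IH (H _ _ Px h1) h2.
Qed.

Lemma connect_cut (R : rel T1) (P : pred T1) :
  (forall x y, R x y -> P x = P y) -> forall x y, connect R x y -> P x = P y.
Proof.
move=> H x y h; apply/esym/eqP.
apply: (@connect_inv R (fun z => P z == P x) _ x y) => //=.
by move=> a b /eqP <- /H ->.
Qed.

Lemma connect_restr (R R' : rel T1) a :
  (forall x y, connect R a x -> R x y -> R' x y) ->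
  forall b, connect R a b -> connect R' a b.
Proof.
move=> H b Hc.
suff /andP [] : connect R a b && connect R' a b by [].
apply: (@connect_inv R (fun z => connect R a z && connect R' a z) _ a b) => //.
  move=> x y /andP [h1 h2] hxy; rewrite (connect_trans h1 (connect1 hxy)).
  by rewrite (connect_trans h2 (connect1 (H _ _ h1 hxy))).
by rewrite !connect0.
Qed.
End Gen.

Section Graph.
Variables (V E : finType) (ends : E -> V * V).
Implicit Types S : {set E}.

Lemma adj_sym S : symmetric (adj ends S).
Proof.
move=> x y; apply/existsP/existsP => [] [f /andP [fS h]]; exists f;
  by rewrite fS orbC.
Qed.

Lemma connect_symS S : connect_sym (adj ends S).
Proof. exact/sym_connect_sym/adj_sym. Qed.

Lemma adj_intro S f x y : f \in S -> ends f = (x, y) -> adj ends S x y.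
Proof. by move=> fS h; apply/existsP; exists f; rewrite fS h eqxx. Qed.

Lemma adjP S x y : adj ends S x y ->
  exists2 f, f \in S & (ends f = (x, y) \/ ends f = (y, x)).
Proof.
by case/existsP=> f /andP [fS /orP [/eqP h|/eqP h]]; exists f => //; [left|right].
Qed.

Lemma adj_mono S S' x y : S \subset S' -> adj ends S x y -> adj ends S' x y.
Proof.
move=> /subsetP sub /adjP [f /sub fS [h|h]]; first exact: adj_intro fS h.
by rewrite adj_sym; apply: adj_intro fS h.
Qed.

Lemma connect_mono S S' x y : S \subset S' ->
  connect (adj ends S) x y -> connect (adj ends S') x y.
Proof.
move=> sub; apply: (@connect_hom _ _ _ _ id) => a b h /=.
by apply: connect1; apply: adj_mono sub h.
Qed.

Definition cc S x := [set y | connect (adj ends S) x y].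

Lemma cc_eq S x y : connect (adj ends S) x y -> cc S x = cc S y.
Proof.
move=> h; apply/setP => z; rewrite !inE; apply/idP/idP => h2.
  by apply: connect_trans h2; rewrite connect_symS.
exact: connect_trans h h2.
Qed.

Lemma cc_eqP S x y : cc S x = cc S y -> connect (adj ends S) x y.
Proof. by move/setP/(_ y); rewrite !inE connect0 => ->. Qed.

Lemma comps_cc S C : C \in comps ends S -> exists x, C = cc S x.
Proof. by case/imsetP => x _ ->; exists x. Qed.

Lemma cc_comps S x : cc S x \in comps ends S.
Proof. by apply/imsetP; exists x. Qed.

End Graph.
Section GLayer.
Variables (V E : finType) (ends : E -> V * V) (S : {set E}) (e : E).
Hypothesis He : e \in S.
Local Notation u := (ends e).1.
Local Notation v := (ends e).2.
Local Notation R := (adj ends S).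
Local Notation R0 := (adj ends (S :\ e)).

Lemma adj_e : R u v.
Proof. by apply: (adj_intro He); case: (ends e). Qed.

Lemma adj_split x y : R x y -> R0 x y \/ (x = u /\ y = v) \/ (x = v /\ y = u).
Proof.
case/adjP => f fS [h|h]; (have [fe|fne] := eqVneq f e; [subst f|]).
- by right; left; rewrite h.
- by left; apply: (adj_intro (f:=f)) => //; rewrite !inE fne.
- by right; right; rewrite h.
- by left; rewrite adj_sym; apply: (adj_intro (f:=f)) => //; rewrite !inE fne.
Qed.

Lemma cc_away a : ~~ connect R u a -> cc ends (S :\ e) a = cc ends S a.
Proof.
move=> na; apply/setP => b; rewrite !inE; apply/idP/idP.
  by apply: connect_mono; apply: subsetDl.
apply: connect_restr => x y hax /adj_split [//|[[hx hy]|[hx hy]]].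
  by subst x; rewrite connect_symS hax in na.
subst x; have Hvu : R v u by rewrite adj_sym adj_e.
by move: na; rewrite connect_symS (connect_trans hax (connect1 Hvu)).
Qed.

Lemma ce_away a : ~~ connect R u a ->
  comp_edges ends (S :\ e) (cc ends (S :\ e) a) = comp_edges ends S (cc ends S a).
Proof.
move=> na; rewrite cc_away //; apply/setP => f; rewrite !inE.
have [->|//] := eqVneq f e; rewrite He /=.
by apply/esym/negbTE; rewrite connect_symS.
Qed.

Lemma K_split b :
  connect R u b = connect R0 u b || connect R0 v b.
Proof.
apply/idP/idP.
  have step : forall x y, connect R0 u x || connect R0 v x -> R x y ->
      connect R0 u y || connect R0 v y.
    { move=> x y /orP [h|h] /adj_split [r|[[hx hy]|[hx hy]]].
      all: try by rewrite hy connect0 ?orbT.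
      all: by rewrite ?(connect_trans h (connect1 r)) ?orbT. }
  by apply: (connect_inv step); rewrite connect0.
have sub : S :\ e \subset S by apply: subsetDl.
case/orP=> h; first exact: connect_mono sub h.
exact: connect_trans (connect1 adj_e) (connect_mono sub h).
Qed.

Lemma card_K :
  #|comp_edges ends S (cc ends S u)| =
  #|comp_edges ends (S :\ e) (cc ends (S :\ e) u)| +
  (if connect R0 u v then 0 else #|comp_edges ends (S :\ e) (cc ends (S :\ e) v)|) + 1.
Proof.
set Du := comp_edges ends (S :\ e) (cc ends (S :\ e) u).
set Dv := comp_edges ends (S :\ e) (cc ends (S :\ e) v).
have -> : comp_edges ends S (cc ends S u) = e |: (Du :|: Dv).
  apply/setP => f; rewrite !inE K_split.
  have [->|fne] := eqVneq f e; first by rewrite He connect0.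
  by rewrite /= andb_orr.
rewrite cardsU1 !inE eqxx /= add1n addn1; congr (_.+1).
case: ifP => huv.
  have -> : Dv = Du by rewrite /Dv -(cc_eq huv).
  by rewrite setUid addn0.
rewrite cardsU; suff -> : Du :&: Dv = set0 by rewrite cards0 subn0.
apply/setP => f; rewrite !inE; apply/negP => /and3P [/andP [_ h1] _ h2].
by move: huv; rewrite (connect_trans h1 _) // connect_symS.
Qed.

End GLayer.

Lemma fstep (T : finType) (f : T -> T) x y : fconnect f (f x) y -> fconnect f x y.
Proof. by apply: connect_trans; apply: connect1 => /=. Qed.

Arguments dends : simpl never.

Section Diam.
Variables (V E : finType) (ends : E -> V * V) (e : E).
Local Notation G' := (dends ends e).
Local Notation u := (ends e).1.
Local Notation v := (ends e).2.
Local Notation dVt := (dV V).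
Local Notation dEt := (dE e).

Definition n0 : dVt := inr (@Ordinal 4 0 isT).
Definition n1 : dVt := inr (@Ordinal 4 1 isT).
Definition n2 : dVt := inr (@Ordinal 4 2 isT).
Definition n3 : dVt := inr (@Ordinal 4 3 isT).
Definition ne (k : nat) (H : k < 7) : dEt := inr (Ordinal H).

Lemma dnew0 : dnew V 0 = n0. Proof. by congr inr; apply: val_inj; rewrite /= inordK. Qed.
Lemma dnew1 : dnew V 1 = n1. Proof. by congr inr; apply: val_inj; rewrite /= inordK. Qed.
Lemma dnew2 : dnew V 2 = n2. Proof. by congr inr; apply: val_inj; rewrite /= inordK. Qed.
Lemma dnew3 : dnew V 3 = n3. Proof. by congr inr; apply: val_inj; rewrite /= inordK. Qed.

Definition dtab (i : nat) : dVt * dVt :=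
  match i with
  | 0 => (inl u, n0)
  | 1 => (n1, inl v)
  | 2 => (n0, n2)
  | 3 => (n0, n3)
  | 4 => (n1, n2)
  | 5 => (n1, n3)
  | _ => (n2, n3)
  end.

Lemma dendsE (i : 'I_7) : G' (inr i) = dtab (val i).
Proof.
rewrite /dends /dtab; case: (val i) => [|[|[|[|[|[|k]]]]]];
  by rewrite ?dnew0 ?dnew1 ?dnew2 ?dnew3.
Qed.

Lemma dendsL (y : {x : E | x != e}) :
  G' (inl y) = (inl (ends (val y)).1, inl (ends (val y)).2).
Proof. by []. Qed.


Local Notation o7 k := (@Ordinal 7 k isT).

Definition mm (d : E * bool) : dEt * bool :=
  match (insub d.1 : option {x : E | x != e}) with
  | Some y => (inl y, d.2)
  | None => if d.2 then (inr (o7 0), true) else (inr (o7 1), false)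
  end.

Definition tb (k : nat) (b : bool) :=
  match k with 0 | 1 | 2 | 6 => b | 5 => ~~ b | _ => false end.

Definition hh (d : dEt * bool) : E * bool :=
  match d with (inl y, b) => (val y, b) | (inr i, b) => (e, tb (val i) b) end.

Definition isold (d : dEt * bool) : bool :=
  match d with
  | (inl _, _) => true
  | (inr i, b) => ((val i == 0) && b) || ((val i == 1) && ~~ b)
  end.

Lemma mm_inl (y : {x : E | x != e}) b : mm (val y, b) = (inl y, b).
Proof. by rewrite /mm /= valK. Qed.

Lemma mm_e b : mm (e, b) = if b then (inr (o7 0), true) else (inr (o7 1), false).
Proof. by rewrite /mm /= insubF // eqxx. Qed.

Lemma hh_mm d : hh (mm d) = d.
Proof.
case: d => x b; have [->|xne] := eqVneq x e.
  by rewrite mm_e; case: b.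
by rewrite -[x]/(val (Sub x xne : {x : E | x != e})) mm_inl.
Qed.

Lemma isold_mm d : isold (mm d).
Proof.
case: d => x b; have [->|xne] := eqVneq x e.
  by rewrite mm_e; case: b.
by rewrite -[x]/(val (Sub x xne : {x : E | x != e})) mm_inl.
Qed.

Lemma mm_hh d : isold d -> mm (hh d) = d.
Proof.
case: d => [[y|[[|[|k]] Hk]] b] //=; first by rewrite mm_inl.
  by case: b => //= _; rewrite mm_e; congr (inr _, _); apply: val_inj.
by case: b => //= _; rewrite mm_e; congr (inr _, _); apply: val_inj.
Qed.

Definition rnew (d : dEt * bool) : dEt * bool :=
  match d with
  | (inl _, _) => d
  | (inr i, b) =>
    match val i, b with
    | 0, false => (inr (o7 2), true)
    | 2, true => (inr (o7 3), true)
    | 3, true => (inr (o7 0), false)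
    | 2, false => (inr (o7 6), true)
    | 6, true => (inr (o7 4), false)
    | 4, false => (inr (o7 2), false)
    | 6, false => (inr (o7 5), false)
    | 5, false => (inr (o7 3), false)
    | 3, false => (inr (o7 6), false)
    | 5, true => (inr (o7 1), true)
    | 1, true => (inr (o7 4), true)
    | 4, true => (inr (o7 5), true)
    | _, _ => d
    end
  end.

Definition rnewi (d : dEt * bool) : dEt * bool :=
  match d with
  | (inl _, _) => d
  | (inr i, b) =>
    match val i, b with
    | 2, true => (inr (o7 0), false)
    | 3, true => (inr (o7 2), true)
    | 0, false => (inr (o7 3), true)
    | 6, true => (inr (o7 2), false)
    | 4, false => (inr (o7 6), true)
    | 2, false => (inr (o7 4), false)
    | 5, false => (inr (o7 6), false)
    | 3, false => (inr (o7 5), false)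
    | 6, false => (inr (o7 3), false)
    | 1, true => (inr (o7 5), true)
    | 4, true => (inr (o7 1), true)
    | 5, true => (inr (o7 4), true)
    | _, _ => d
    end
  end.

Variable r : {perm E * bool}.

Definition rf (d : dEt * bool) := if isold d then mm (r (hh d)) else rnew d.
Definition rfi (d : dEt * bool) := if isold d then mm ((r^-1)%g (hh d)) else rnewi d.

Lemma I7_ind (P : 'I_7 -> Prop) :
  P (o7 0) -> P (o7 1) -> P (o7 2) -> P (o7 3) -> P (o7 4) -> P (o7 5) -> P (o7 6) ->
  forall i, P i.
Proof.
move=> p0 p1 p2 p3 p4 p5 p6 [[|[|[|[|[|[|[|k]]]]]]] Hk] //;
  by rewrite (bool_irrelevance Hk isT).
Qed.

Lemma I4_ind (P : 'I_4 -> Prop) :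
  P (@Ordinal 4 0 isT) -> P (@Ordinal 4 1 isT) -> P (@Ordinal 4 2 isT) ->
  P (@Ordinal 4 3 isT) -> forall i, P i.
Proof.
move=> p0 p1 p2 p3 [[|[|[|[|k]]]] Hk] //;
  by rewrite (bool_irrelevance Hk isT).
Qed.

Ltac case_d d := let i := fresh "i" in let b := fresh "b" in
  case: d => [[?|i] b]; [|elim/I7_ind: i; case: b].

Lemma rfK : cancel rf rfi.
Proof.
move=> d; rewrite /rfi /rf; case hd: (isold d).
  by rewrite isold_mm hh_mm permK mm_hh.
by move: hd; case_d d.
Qed.

Definition r' : {perm dEt * bool} := perm (can_inj rfK).

Lemma r'E d : r' d = rf d.
Proof. by rewrite permE. Qed.

Lemma tail_mm d : tail G' (mm d) = inl (tail ends d).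
Proof.
case: d => x b; have [->|xne] := eqVneq x e.
  by rewrite mm_e; case: b; rewrite /tail /= ?dendsE.
by rewrite -[x]/(val (Sub x xne : {x : E | x != e})) mm_inl /tail /=; case: b.
Qed.

Lemma tail_old d : isold d -> tail G' d = inl (tail ends (hh d)).
Proof. by move/mm_hh => {1}<-; rewrite tail_mm. Qed.

Lemma rf_mm d : rf (mm d) = mm (r (hh (mm d))).
Proof. by rewrite /rf isold_mm. Qed.

Lemma fconnect_mm x y : fconnect r x y -> fconnect r' (mm x) (mm y).
Proof.
apply: (@connect_hom _ _ _ _ mm) => a b /eqP <-.
by apply: connect1; rewrite /= r'E rf_mm hh_mm.
Qed.

Definition fph (d : dEt * bool) := r' (flip d).

Ltac fsteps := do 12 (try (first [exact: connect0 | apply: fstep; try unfold fph; rewrite ?r'E /rf /=])).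

Lemma rot_r' : rotation_system ends r -> rotation_system G' r'.
Proof.
case=> rt rc; split.
  move=> d; rewrite r'E /rf; case hd: (isold d).
    by rewrite tail_mm rt tail_old.
  by move: hd; case_d d => //= _; rewrite /tail /= ?dendsE.
move=> d d'; case hd: (isold d); case hd': (isold d').
- rewrite !tail_old // => [[/rc /fconnect_mm]].
  by rewrite !mm_hh.
- rewrite (tail_old hd); move: hd'; case_d d' => //= _; by rewrite /tail /= ?dendsE.
- rewrite (tail_old hd'); move: hd; case_d d => //= _; by rewrite /tail /= ?dendsE.
move: hd hd'; case_d d => //= _; case_d d' => //= _;
  rewrite /tail /= ?dendsE /= ?dnew0 ?dnew1 ?dnew2 ?dnew3 => /eqP /= h; try (by []); fsteps.
Qed.

Lemma flip_inj (T : finType) : injective (@flip T).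
Proof. by case=> x b [y c] [-> /negbRL]; rewrite negbK => ->. Qed.

Lemma nfaces_r' : nfaces r' = nfaces r.
Proof.
rewrite /nfaces.
pose f := fun d => r (flip d).
have inj' : injective fph by move=> x y /perm_inj /flip_inj.
have inj : injective f by move=> x y /perm_inj /flip_inj.
have sym' := fconnect_sym inj'.
have sym := fconnect_sym inj.
have cl : closed (frel fph) [set: dEt * bool] by move=> x y _; rewrite !inE.
have ra : rel_adjunction mm (frel fph) (frel f) [set: dEt * bool].
  apply: (@intro_adjunction _ _ mm _ _ sym _ cl (fun x _ => hh x)).
  - move=> x _; split.
      case hx: (isold x); first by rewrite mm_hh.
      rewrite sym'; move: hx; case_d x => //= _; rewrite ?mm_e; fsteps.
    move=> y _ /eqP <-; rewrite /fph r'E /rf.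
    case: x => [[z|i] b].
      by rewrite /= hh_mm; apply: connect1; rewrite /f /=.
    elim/I7_ind: i; case: b; rewrite /= ?hh_mm; try exact: connect0;
      by apply: connect1; rewrite /f /=.
  - move=> x _; split; first by rewrite hh_mm connect0.
    move=> y /eqP <-; case: x => x b; have [->|xne] := eqVneq x e.
      rewrite mm_e; case: b; fsteps.
    rewrite -[x]/(val (Sub x xne : {x : E | x != e})) mm_inl.
    by apply: connect1; rewrite /= /fph r'E /rf /=.
have := adjunction_n_comp mm sym' sym cl ra.
by rewrite /fph => ->; apply: eq_n_comp_r => d; rewrite !inE.
Qed.

Definition pr (k : 'I_4 -> V) (x : dVt) : V := match x with inl a => a | inr i => k i end.

Ltac dsimp := rewrite ?dendsE /= ?dnew0 ?dnew1 ?dnew2 ?dnew3.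

Lemma proj_conn (S' : {set dEt}) (S0 : {set E}) k :
  (forall y : {x : E | x != e}, inl y \in S' -> val y \in S0) ->
  (forall i, inr i \in S' ->
     pr k (G' (inr i)).1 = pr k (G' (inr i)).2 \/
     adj ends S0 (pr k (G' (inr i)).1) (pr k (G' (inr i)).2)) ->
  forall x y, connect (adj G' S') x y -> connect (adj ends S0) (pr k x) (pr k y).
Proof.
move=> hl hr; apply: connect_hom => x y /adjP [[z|i] fS H].
  have zS := hl _ fS; apply: connect1.
  case: H => -[<- <-] /=.
    by apply: (adj_intro zS); case: (ends _).
  by rewrite adj_sym; apply: (adj_intro zS); case: (ends _).
case: (hr _ fS) => h; case: H => H; rewrite H /= in h.
- by rewrite h connect0.
- by rewrite h connect0.
- exact: connect1.
- by apply: connect1; rewrite adj_sym.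
Qed.

Lemma cut_conn (S' : {set dEt}) (P : pred dVt) :
  (forall f, f \in S' -> P (G' f).1 = P (G' f).2) ->
  forall x y, connect (adj G' S') x y -> P x = P y.
Proof.
move=> h; apply: connect_cut => x y /adjP [f /h fS [] H]; rewrite H /= in fS => //.
Qed.

Lemma lift_conn (S' : {set dEt}) (S0 : {set E}) :
  (forall f, f \in S0 -> connect (adj G' S') (inl (ends f).1) (inl (ends f).2)) ->
  forall a b, connect (adj ends S0) a b -> connect (adj G' S') (inl a) (inl b).
Proof.
move=> h; apply: (@connect_hom _ _ _ _ inl) => a b /adjP [f /h fS [] H];
  rewrite H /= in fS => //.
by rewrite connect_symS.
Qed.

Lemma adj_inl (S' : {set dEt}) f (H : f != e) : inl (Sub f H) \in S' ->
  connect (adj G' S') (inl (ends f).1) (inl (ends f).2).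
Proof. by move=> fS; apply: connect1; apply: (adj_intro fS). Qed.

Lemma adj_new (S' : {set dEt}) i : inr i \in S' ->
  adj G' S' (dtab (val i)).1 (dtab (val i)).2.
Proof. by move=> fS; apply: (adj_intro fS); rewrite dendsE; case: (dtab _). Qed.

Definition Sset (S : {set E}) (l : seq nat) : {set dEt} :=
  [set x | match x with inl y => val y \in S | inr i => val i \in l end].

Lemma Sset_inl S l y : (inl y \in Sset S l) = (val y \in S).
Proof. by rewrite inE. Qed.
Lemma Sset_inr S l i : (inr i \in Sset S l) = (val i \in l).
Proof. by rewrite inE. Qed.
Lemma Sset_inlC S l y : (inl y \in ~: Sset S l) = (val y \notin S).
Proof. by rewrite !inE. Qed.
Lemma Sset_inrC S l i : (inr i \in ~: Sset S l) = (val i \notin l).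
Proof. by rewrite !inE. Qed.

Lemma card_ce (S' : {set dEt}) (S0 : {set E}) (D' : {set dVt}) :
  e \notin S0 -> (forall z, (inl z \in S') = (val z \in S0)) ->
  #|comp_edges G' S' D'| =
  #|comp_edges ends S0 [set a | inl a \in D']| +
  #|[set i : 'I_7 | (inr i \in S') && ((G' (inr i)).1 \in D')]|.
Proof.
move=> eS hS.
set A := [set z : {x : E | x != e} | inl z \in comp_edges G' S' D'].
set B := [set i : 'I_7 | (inr i \in S') && ((G' (inr i)).1 \in D')].
have -> : comp_edges G' S' D' = inl @: A :|: inr @: B.
  apply/setP => -[z|i]; rewrite in_setU.
    rewrite (mem_imset _ _ (@inl_inj _ _)) [z \in A]inE.
    by case: imsetP => [[? _ //]|_]; rewrite orbF.
  rewrite (mem_imset _ _ (@inr_inj _ _)) [i \in B]inE.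
  case: imsetP => [[? _ //]|_] /=; by rewrite !inE.
rewrite cardsU; have -> : inl @: A :&: inr @: B = set0.
  by apply/setP => x; rewrite !inE; apply/andP => -[/imsetP [? _ ->] /imsetP [? _]].
rewrite cards0 subn0 !card_imset; [|exact: inr_inj|exact: inl_inj].
congr (_ + _).
rewrite -(card_imset _ val_inj); apply: eq_card => y.
rewrite !inE; apply/imsetP/idP.
  by case=> z; rewrite !inE hS => /andP [h1 h2] ->; rewrite h1.
move=> /andP [yS yD]; have ye : y != e by apply: contraNneq eS => <-.
by exists (Sub y ye) => //; rewrite !inE hS yS.
Qed.

Lemma card7 (P : pred 'I_7) : #|[set i | P i]| =
  P (o7 0) + P (o7 1) + P (o7 2) + P (o7 3) + P (o7 4) + P (o7 5) + P (o7 6).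
Proof.
rewrite -sum1_card big_mkcond /= !big_ord_recl big_ord0 addn0 /= !inE !addnA.
have EE i (H : i < 7) : (if P (Ordinal H) then 1 else 0) = P (Ordinal H) by case: (P _).
rewrite !EE; repeat congr (_ + _); congr (nat_of_bool (P _)); exact: val_inj.
Qed.

Lemma odd_cc (T : {set E}) C a : odd_comps ends T = [set C] ->
  odd #|comp_edges ends (~: T) (cc ends (~: T) a)| -> cc ends (~: T) a = C.
Proof.
move=> H hodd; have : cc ends (~: T) a \in odd_comps ends T.
  by rewrite inE cc_comps hodd.
by rewrite H inE => /eqP.
Qed.

Lemma C_cc (T : {set E}) C : odd_comps ends T = [set C] -> exists a0, C = cc ends (~: T) a0.
Proof.
move=> H; have : C \in odd_comps ends T by rewrite H inE.
by rewrite inE => /andP [/comps_cc].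
Qed.

Definition good (T' : {set dEt}) := spanning_tree G' T' /\
  exists C', odd_comps G' T' = [set C'] /\ #|comp_edges G' (~: T') C'| = 1.

Lemma odd_comps_char (T' : {set dEt}) C' :
  C' \in comps G' (~: T') ->
  (forall x, odd #|comp_edges G' (~: T') (cc G' (~: T') x)| -> cc G' (~: T') x = C') ->
  odd #|comp_edges G' (~: T') C'| ->
  odd_comps G' T' = [set C'].
Proof.
move=> hC hx hodd; apply/setP => D; rewrite !inE; apply/andP/eqP.
  by case=> /comps_cc [x ->] /hx.
by move=> ->.
Qed.

Ltac I7 j := elim/I7_ind: j; rewrite ?inE /= ?dendsE /= ?dnew0 ?dnew1 ?dnew2 ?dnew3.

Definition isnew (x : dVt) := if x is inr _ then true else false.

Lemma bridge_proj (X : {set dEt}) (S0 : {set E}) k x y :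
  (forall y, inl y \in X -> val y \in S0) ->
  (forall i, inr i \in X ->
     pr k (dtab (val i)).1 = pr k (dtab (val i)).2 \/
     adj ends S0 (pr k (dtab (val i)).1) (pr k (dtab (val i)).2)) ->
  ~~ connect (adj ends S0) (pr k x) (pr k y) -> ~~ connect (adj G' X) x y.
Proof.
move=> hl hr hn; apply/negP => hc; move/negP: hn; apply.
by apply: (proj_conn hl _ hc) => i /hr; rewrite dendsE.
Qed.

Lemma bridge_cut (X : {set dEt}) (P : pred dVt) x y :
  (forall z, inl z \in X -> P (inl (ends (val z)).1) = P (inl (ends (val z)).2)) ->
  (forall i, inr i \in X -> P (dtab (val i)).1 = P (dtab (val i)).2) ->
  P x != P y -> ~~ connect (adj G' X) x y.
Proof.
move=> hl hr hn; apply/negP => hc; move/negP: hn; apply; apply/eqP.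
by apply: (cut_conn _ hc) => -[z|i] /=; [apply: hl | rewrite dendsE; apply: hr].
Qed.

Lemma cn (X : {set dEt}) k (H : k < 7) : inr (Ordinal H) \in X ->
  connect (adj G' X) (dtab k).1 (dtab k).2.
Proof. by move=> h; apply: connect1; apply: (adj_new h). Qed.

Lemma cn' (X : {set dEt}) k (H : k < 7) : inr (Ordinal H) \in X ->
  connect (adj G' X) (dtab k).2 (dtab k).1.
Proof. by move=> h; rewrite connect_symS; apply: cn h. Qed.

Lemma in_notin_T (T : {set E}) (z : {x : E | x != e}) l :
  (inl z \in ~: Sset (~: T) l) = (val z \in T).
Proof. by rewrite !inE negbK. Qed.

Section CaseA.
Variables (T : {set E}) (C : {set V}).
Hypotheses (eT : e \in T) (stT : spanning_tree ends T)
  (oT : odd_comps ends T = [set C]) (cT : #|comp_edges ends (~: T) C| = 1).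

Local Notation S := (~: T).
Local Notation S' := (Sset S [:: 3; 5]).
Local Notation T' := (~: S').

Lemma eS : e \notin S. Proof. by rewrite inE negbK. Qed.

Lemma A1 a b : connect (adj G' S') (inl a) (inl b) = connect (adj ends S) a b.
Proof.
apply/idP/idP.
  move=> h; apply: (@proj_conn S' S (fun _ => u) _ _ _ _ h).
    by move=> y; rewrite Sset_inl.
  by move=> i; I7 i; left.
apply: lift_conn => f fS; have fe : f != e by apply: contraNneq eS => <-.
by apply: adj_inl; rewrite Sset_inl.
Qed.

Lemma A2 a i : connect (adj G' S') (inl a) (inr i) = false.
Proof.
apply/negP => h.
have hc : forall f, f \in S' -> isnew (G' f).1 = isnew (G' f).2.
  by move=> -[y|j] //; I7 j.
by have := cut_conn hc h.
Qed.

Lemma A3 : connect (adj G' S') n0 n1.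
Proof.
apply: (@connect_trans _ _ n3); apply: connect1.
  by apply: (@adj_new _ (o7 3)); rewrite inE.
by rewrite adj_sym; apply: (@adj_new _ (o7 5)); rewrite inE.
Qed.

Lemma countA_inl a : #|comp_edges G' S' (cc G' S' (inl a))| =
  #|comp_edges ends S (cc ends S a)|.
Proof.
rewrite (card_ce (S0 := S)) ?eS //; last by move=> z; rewrite Sset_inl.
rewrite card7 /= !inE !A2 /= !addn0; do 3 f_equal.
by apply/setP => b; rewrite !inE A1.
Qed.

Lemma countA_inr i : ~~ odd #|comp_edges G' S' (cc G' S' (inr i))|.
Proof.
rewrite (card_ce (S0 := S)) ?eS //; last by move=> z; rewrite Sset_inl.
have -> : [set a | inl a \in cc G' S' (inr i)] = set0.
  by apply/setP => b; rewrite !inE connect_symS A2.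
have -> : comp_edges ends S set0 = set0 by apply/setP => f; rewrite !inE andbF.
rewrite cards0 card7 !inE !dendsE /=.
have -> : connect (adj G' S') (inr i) n1 = connect (adj G' S') (inr i) n0.
  apply/idP/idP => h; first by apply: connect_trans h _; rewrite connect_symS A3.
  exact: connect_trans h A3.
by case: (connect _ _ n0).
Qed.

Lemma connT' : connected_on G' T'.
Proof.
have c0 : connect (adj G' T') (inl u) n0 by apply: (@cn _ 0 isT); rewrite !inE.
have c2 : connect (adj G' T') n0 n2 by apply: (@cn _ 2 isT); rewrite !inE.
have c4 : connect (adj G' T') n2 n1 by apply: (@cn' _ 4 isT); rewrite !inE.
have c1 : connect (adj G' T') n1 (inl v) by apply: (@cn _ 1 isT); rewrite !inE.
have c6 : connect (adj G' T') n2 n3 by apply: (@cn _ 6 isT); rewrite !inE.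
have hu : forall x, connect (adj G' T') (inl u) x.
  case=> [a|i].
    apply: (@lift_conn _ T); last by apply: stT.1.
    move=> f fT; have [->|fe] := eqVneq f e.
      exact: connect_trans c0 (connect_trans c2 (connect_trans c4 c1)).
    by apply: (adj_inl (H := fe)); rewrite in_notin_T.
  elim/I4_ind: i.
  - exact: c0.
  - exact: connect_trans c0 (connect_trans c2 c4).
  - exact: connect_trans c0 c2.
  - exact: connect_trans c0 (connect_trans c2 c6).
move=> x y; apply: connect_trans (hu y); rewrite connect_symS; exact: hu.
Qed.

Lemma hlA i : forall y, inl y \in T' :\ inr i -> val y \in T :\ e.
Proof. by move=> y; rewrite !inE negbK (valP y) => /andP [_ ->]. Qed.

Lemma ends_e : ends e = (u, v).
Proof. by case: (ends e). Qed.

Lemma bridgesA f : f \in T' -> ~~ connect (adj G' (T' :\ f)) (G' f).1 (G' f).2.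
Proof.
case: f => [z|i] hf.
  have zT : val z \in T by rewrite in_notin_T in hf.
  rewrite dendsL /=.
  apply: (@bridge_proj _ (T :\ val z) (fun _ => u)) => /=; last exact: stT.2 _ zT.
    move=> y; rewrite !inE negbK => /andP [hy ->]; rewrite andbT.
    by apply: contra hy => /eqP /val_inj ->.
  move=> j; I7 j; try done; try by left.
  right; apply: (adj_intro (f := e)); last exact: ends_e.
  by rewrite !inE eT andbT eq_sym (valP z).
have nuv := stT.2 e eT; rewrite ends_e /= in nuv.
have nvu : ~~ connect (adj ends (T :\ e)) v u by rewrite connect_symS.
rewrite dendsE; move: hf; elim/I7_ind: i; rewrite !inE //= => _.
- apply: (@bridge_proj _ (T :\ e) (fun _ => v)) => //; first exact: hlA.
  by move=> j; I7 j; try done; try by left.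
- apply: (@bridge_proj _ (T :\ e) (fun _ => u)) => //; first exact: hlA.
  by move=> j; I7 j; try done; try by left.
- apply: (@bridge_proj _ (T :\ e) (fun j => if val j == 0 then u else v)) => //;
    first exact: hlA.
  by move=> j; I7 j; try done; try by left.
- apply: (@bridge_proj _ (T :\ e) (fun j => if val j == 1 then v else u)) => //;
    first exact: hlA.
  by move=> j; I7 j; try done; try by left.
- apply: (@bridge_cut _ (fun x => x == n3)) => //.
  by move=> j; I7 j.
Qed.

Lemma goodA : good T'.
Proof.
split; first by split; [exact: connT' | exact: bridgesA].
have [a0 C0] := C_cc oT.
exists (cc G' S' (inl a0)); rewrite setCK.
have h1 : #|comp_edges G' S' (cc G' S' (inl a0))| = 1 by rewrite countA_inl -C0.
split => //; apply: odd_comps_char; rewrite ?setCK ?h1 //.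
  exact: cc_comps.
case=> [a|i]; last by rewrite (negbTE (countA_inr i)).
rewrite countA_inl => /(odd_cc oT); rewrite C0 => /cc_eqP h.
by apply: cc_eq; rewrite A1.
Qed.

End CaseA.

Section CaseB.
Variables (T : {set E}) (C : {set V}).
Hypotheses (eT : e \notin T) (stT : spanning_tree ends T)
  (oT : odd_comps ends T = [set C]) (cT : #|comp_edges ends (~: T) C| = 1).

Local Notation S := (~: T).
Local Notation S0 := (~: T :\ e).
Local Notation R0 := (adj ends S0).
Local Notation RS := (adj ends S).

Lemma eSB : e \in S. Proof. by rewrite inE. Qed.
Lemma eS0 : e \notin S0. Proof. by rewrite !inE eqxx. Qed.
Lemma hS0 l (z : {x : E | x != e}) : (inl z \in Sset S l) = (val z \in S0).
Proof. by rewrite Sset_inl !inE (valP z). Qed.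

Lemma conn0S a b : connect R0 a b -> connect RS a b.
Proof. by apply: connect_mono; apply: subsetDl. Qed.

Lemma lift0 (X : {set dEt}) l : X = Sset S l ->
  forall a b, connect R0 a b -> connect (adj G' X) (inl a) (inl b).
Proof.
move=> -> a b; apply: lift_conn => f fS; have fe : f != e.
  by move: fS; rewrite !inE => /andP [].
by apply: (adj_inl (H := fe)); rewrite hS0.
Qed.

Lemma hl0 l (y : {x : E | x != e}) : inl y \in Sset S l -> val y \in S0.
Proof. by rewrite hS0. Qed.

Lemma countB_inl l a :
  #|comp_edges G' (Sset S l) (cc G' (Sset S l) (inl a))| =
  #|comp_edges ends S0 [set b | inl b \in cc G' (Sset S l) (inl a)]| +
  #|[set i : 'I_7 | (inr i \in Sset S l) &&
       ((G' (inr i)).1 \in cc G' (Sset S l) (inl a))]|.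
Proof. by rewrite (card_ce (S0 := S0)) ?eS0 // => z; rewrite hS0. Qed.

Definition inn (l : seq dVt) : pred dVt := fun x => x \in l.

Local Notation S1 := (Sset S [:: 0; 4; 6]).

Lemma B1a a b : connect (adj G' S1) (inl a) (inl b) = connect R0 a b.
Proof.
apply/idP/idP; last exact: lift0.
move=> h; apply: (@proj_conn S1 S0 (fun _ => u) _ _ _ _ h); first exact: hl0.
by move=> i; I7 i; try done; try by left.
Qed.

Lemma B1b a i :
  connect (adj G' S1) (inl a) (inr i) = (val i == 0) && connect R0 a u.
Proof.
apply/idP/andP.
  move=> h; split.
    have hc : forall f, f \in S1 -> inn [:: n1; n2; n3] (G' f).1 = inn [:: n1; n2; n3] (G' f).2.
      by move=> -[y|j] //; I7 j.
    have := cut_conn hc h; move: h; elim/I4_ind: i => //.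
  have := @proj_conn S1 S0 (fun _ => u) (@hl0 _) _ _ _ h; apply.
  by move=> j; I7 j; try done; try by left.
case=> /eqP hi hau; apply: connect_trans (lift0 (erefl _) hau) _.
have -> : i = @Ordinal 4 0 isT by apply: val_inj.
by apply: (@cn _ 0 isT); rewrite inE.
Qed.

Lemma countB1_inl a : #|comp_edges G' S1 (cc G' S1 (inl a))| =
  #|comp_edges ends S0 (cc ends S0 a)| + connect R0 a u.
Proof.
rewrite countB_inl card7 !inE !dendsE /= !B1b /= !addn0 ?add0n.
congr (#|_| + _); last by rewrite B1a.
by congr comp_edges; apply/setP => b; rewrite !inE B1a.
Qed.

Lemma n12_S1 : connect (adj G' S1) n1 n2.
Proof. by apply: (@cn _ 4 isT); rewrite inE. Qed.
Lemma n23_S1 : connect (adj G' S1) n2 n3.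
Proof. by apply: (@cn _ 6 isT); rewrite inE. Qed.
Lemma u0_S1 : connect (adj G' S1) (inl u) n0.
Proof. by apply: (@cn _ 0 isT); rewrite inE. Qed.

Lemma countB1_inr i : val i != 0 -> ~~ odd #|comp_edges G' S1 (cc G' S1 (inr i))|.
Proof.
move=> hi; rewrite (card_ce (S0 := S0)) ?eS0 //; last by move=> z; rewrite hS0.
have -> : [set a | inl a \in cc G' S1 (inr i)] = set0.
  by apply/setP => b; rewrite !inE connect_symS B1b (negbTE hi).
have -> : comp_edges ends S0 set0 = set0 by apply/setP => f; rewrite !inE andbF.
rewrite cards0 card7 !inE !dendsE /=.
rewrite [connect _ (inr i) (inl u)]connect_symS B1b (negbTE hi) /=.
have -> : connect (adj G' S1) (inr i) n2 = connect (adj G' S1) (inr i) n1.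
  apply/idP/idP => h; last exact: connect_trans h n12_S1.
  by apply: connect_trans h _; rewrite connect_symS n12_S1.
by case: (connect _ _ n1).
Qed.

Lemma connT1 : connected_on G' (~: S1).
Proof.
have c1 : connect (adj G' (~: S1)) n1 (inl v) by apply: (@cn _ 1 isT); rewrite !inE.
have c5 : connect (adj G' (~: S1)) n3 n1 by apply: (@cn' _ 5 isT); rewrite !inE.
have c3 : connect (adj G' (~: S1)) n0 n3 by apply: (@cn _ 3 isT); rewrite !inE.
have c2 : connect (adj G' (~: S1)) n2 n0 by apply: (@cn' _ 2 isT); rewrite !inE.
have hv : forall x, connect (adj G' (~: S1)) x (inl v).
  case=> [a|i].
    apply: (@lift_conn _ T); last by apply: stT.1.
    move=> f fT; have fe : f != e by apply: contraNneq eT => <-.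
    by apply: (adj_inl (H := fe)); rewrite in_notin_T.
  elim/I4_ind: i.
  - exact: connect_trans c3 (connect_trans c5 c1).
  - exact: c1.
  - exact: connect_trans c2 (connect_trans c3 (connect_trans c5 c1)).
  - exact: connect_trans c5 c1.
move=> x y; apply: connect_trans (hv x) _; rewrite connect_symS; exact: hv.
Qed.

Lemma bridgesB1 f : f \in ~: S1 ->
  ~~ connect (adj G' (~: S1 :\ f)) (G' f).1 (G' f).2.
Proof.
case: f => [z|i] hf.
  have zT : val z \in T by rewrite in_notin_T in hf.
  rewrite dendsL /=.
  apply: (@bridge_proj _ (T :\ val z) (fun _ => v)) => /=; last exact: stT.2 _ zT.
    move=> y; rewrite !inE negbK => /andP [hy ->]; rewrite andbT.
    by apply: contra hy => /eqP /val_inj ->.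
  by move=> j; I7 j; try done; try by left.
rewrite dendsE; move: hf; elim/I7_ind: i; rewrite !inE //= => _.
- by apply: (@bridge_cut _ isnew) => // j; I7 j.
- by apply: (@bridge_cut _ (fun x => x == n2)) => // j; I7 j.
- by apply: (@bridge_cut _ (inn [:: n0; n2])) => // j; I7 j.
- by apply: (@bridge_cut _ (inn [:: n0; n2; n3])) => // j; I7 j.
Qed.

Lemma goodB1 : connect R0 u v || ~~ odd #|comp_edges ends S0 (cc ends S0 v)| ->
  good (~: S1).
Proof.
move=> hB.
split; first by split; [exact: connT1 | exact: bridgesB1].
have [a0 C0] := C_cc oT.
have hK := card_K ends eSB.
have hKp : odd #|comp_edges ends S (cc ends S u)| =
    ~~ odd #|comp_edges ends S0 (cc ends S0 u)|.
  rewrite hK; move: hB; case: (connect R0 u v) => /=.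
    by rewrite addn0 addn1 /=.
  by move=> hv; rewrite addn1 /= oddD (negbTE hv) addbF.
pose C' := if connect RS u a0 then cc G' S1 (inl u) else cc G' S1 (inl a0).
have count_away a : ~~ connect RS u a ->
    #|comp_edges G' S1 (cc G' S1 (inl a))| = #|comp_edges ends S (cc ends S a)|.
  move=> na; rewrite countB1_inl (ce_away eSB na).
  have -> : connect R0 a u = false.
    apply/negbTE/negP => hau; move/negP: na; apply; rewrite connect_symS.
    exact: conn0S hau.
  by rewrite addn0.
have count_u : #|comp_edges G' S1 (cc G' S1 (inl u))| =
    #|comp_edges ends S0 (cc ends S0 u)| + 1 by rewrite countB1_inl connect0.
have h1 : #|comp_edges G' S1 C'| = 1.
  rewrite /C'; case: ifP => hu.
    have : #|comp_edges ends S (cc ends S u)| = 1 by rewrite (cc_eq hu) -C0.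
    rewrite hK count_u; lia.
  by rewrite count_away ?hu // -C0.
exists C'; rewrite setCK; split => //.
apply: odd_comps_char; rewrite ?setCK; last by rewrite h1.
  by rewrite /C'; case: ifP => _; apply: cc_comps.
suff hinl : forall a, odd #|comp_edges G' S1 (cc G' S1 (inl a))| ->
    cc G' S1 (inl a) = C'.
  case=> [a|i]; first exact: hinl.
  case hi : (val i == 0).
    have -> : cc G' S1 (inr i) = cc G' S1 (inl u).
      apply: cc_eq; rewrite connect_symS B1b hi connect0 //.
    exact: hinl.
  by rewrite (negbTE (countB1_inr (negbT hi))).
move=> a hodd; case hu: (connect RS u a).
  case hua : (connect R0 u a).
    have ca : cc G' S1 (inl a) = cc G' S1 (inl u).
      by apply: cc_eq; rewrite B1a connect_symS.
    rewrite ca count_u addn1 /= in hodd.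
    have hKC : cc ends S u = C by apply: (odd_cc oT); rewrite hKp.
    have hua0 : connect RS u a0 by apply: cc_eqP; rewrite hKC C0.
    by rewrite ca /C' hua0.
  have hva : connect R0 v a by move: hu; rewrite (K_split ends eSB) hua.
  have cva : cc ends S0 a = cc ends S0 v by apply: cc_eq; rewrite connect_symS.
  move: hodd; rewrite countB1_inl connect_symS hua addn0 cva.
  have nuv : connect R0 u v = false.
    by apply/negbTE/negP => huv; rewrite (connect_trans huv hva) in hua.
  by move: hB; rewrite nuv /= => /negbTE ->.
move: hodd; rewrite count_away ?hu // => /(odd_cc oT); rewrite C0 => /cc_eqP haa0.
have nu0 : connect RS u a0 = false.
  apply/negbTE/negP => hu0; move/negP: hu; apply.
  by apply: connect_trans hu0 _; rewrite connect_symS.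
rewrite /C' nu0; apply: cc_eq; rewrite B1a.
have : a0 \in cc ends S0 a by rewrite (cc_away eSB (negbT hu)) inE.
by rewrite inE.
Qed.

Local Notation S2 := (Sset S [:: 1; 2; 6]).

Lemma B2a a b : connect (adj G' S2) (inl a) (inl b) = connect R0 a b.
Proof.
apply/idP/idP; last exact: lift0.
move=> h; apply: (@proj_conn S2 S0 (fun _ => v) _ _ _ _ h); first exact: hl0.
by move=> i; I7 i; try done; try by left.
Qed.

Lemma cut2 x y : connect (adj G' S2) x y -> inn [:: n0; n2; n3] x = inn [:: n0; n2; n3] y.
Proof. by apply: cut_conn => -[z|j] //; I7 j. Qed.

Lemma B2b a i :
  connect (adj G' S2) (inl a) (inr i) = (val i == 1) && connect R0 a v.
Proof.
apply/idP/andP.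
  move=> h; split.
    by have := cut2 h; move: h; elim/I4_ind: i.
  have := @proj_conn S2 S0 (fun _ => v) (@hl0 _) _ _ _ h; apply.
  by move=> j; I7 j; try done; try by left.
case=> /eqP hi hav; apply: connect_trans (lift0 (erefl _) hav) _.
have -> : i = @Ordinal 4 1 isT by apply: val_inj.
by apply: (@cn' _ 1 isT); rewrite inE.
Qed.

Lemma countB2_inl a : #|comp_edges G' S2 (cc G' S2 (inl a))| =
  #|comp_edges ends S0 (cc ends S0 a)| + connect R0 a v.
Proof.
rewrite countB_inl card7 !inE !dendsE /= !B2b /= !addn0 ?add0n.
congr (#|_| + _); first by congr comp_edges; apply/setP => b; rewrite !inE B2a.
Qed.

Lemma countB2_inr i : val i != 1 -> ~~ odd #|comp_edges G' S2 (cc G' S2 (inr i))|.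
Proof.
move=> hi; rewrite (card_ce (S0 := S0)) ?eS0 //; last by move=> z; rewrite hS0.
have -> : [set a | inl a \in cc G' S2 (inr i)] = set0.
  by apply/setP => b; rewrite !inE connect_symS B2b (negbTE hi).
have -> : comp_edges ends S0 set0 = set0 by apply/setP => f; rewrite !inE andbF.
rewrite cards0 card7 !inE !dendsE /=.
have -> : connect (adj G' S2) (inr i) n1 = false.
  by apply/negP => /cut2; move: hi; elim/I4_ind: i.
have n02 : connect (adj G' S2) n0 n2 by apply: (@cn _ 2 isT); rewrite inE.
have -> : connect (adj G' S2) (inr i) n2 = connect (adj G' S2) (inr i) n0.
  apply/idP/idP => h; last exact: connect_trans h n02.
  by apply: connect_trans h _; rewrite connect_symS n02.
by case: (connect _ _ n0).
Qed.

Lemma connT2 : connected_on G' (~: S2).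
Proof.
have c0 : connect (adj G' (~: S2)) n0 (inl u) by apply: (@cn' _ 0 isT); rewrite !inE.
have c3 : connect (adj G' (~: S2)) n3 n0 by apply: (@cn' _ 3 isT); rewrite !inE.
have c5 : connect (adj G' (~: S2)) n1 n3 by apply: (@cn _ 5 isT); rewrite !inE.
have c4 : connect (adj G' (~: S2)) n2 n1 by apply: (@cn' _ 4 isT); rewrite !inE.
have hv : forall x, connect (adj G' (~: S2)) x (inl u).
  case=> [a|i].
    apply: (@lift_conn _ T); last by apply: stT.1.
    move=> f fT; have fe : f != e by apply: contraNneq eT => <-.
    by apply: (adj_inl (H := fe)); rewrite in_notin_T.
  elim/I4_ind: i.
  - exact: c0.
  - exact: connect_trans c5 (connect_trans c3 c0).
  - exact: connect_trans c4 (connect_trans c5 (connect_trans c3 c0)).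
  - exact: connect_trans c3 c0.
move=> x y; apply: connect_trans (hv x) _; rewrite connect_symS; exact: hv.
Qed.

Lemma bridgesB2 f : f \in ~: S2 ->
  ~~ connect (adj G' (~: S2 :\ f)) (G' f).1 (G' f).2.
Proof.
case: f => [z|i] hf.
  have zT : val z \in T by rewrite in_notin_T in hf.
  rewrite dendsL /=.
  apply: (@bridge_proj _ (T :\ val z) (fun _ => u)) => /=; last exact: stT.2 _ zT.
    move=> y; rewrite !inE negbK => /andP [hy ->]; rewrite andbT.
    by apply: contra hy => /eqP /val_inj ->.
  by move=> j; I7 j; try done; try by left.
rewrite dendsE; move: hf; elim/I7_ind: i; rewrite !inE //= => _.
- by apply: (@bridge_cut _ isnew) => // j; I7 j.
- by apply: (@bridge_cut _ (inn [:: n1; n2; n3])) => // j; I7 j.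
- by apply: (@bridge_cut _ (fun x => x == n2)) => // j; I7 j.
- by apply: (@bridge_cut _ (inn [:: n1; n2])) => // j; I7 j.
Qed.

Lemma goodB2 : ~~ connect R0 u v -> odd #|comp_edges ends S0 (cc ends S0 v)| ->
  good (~: S2).
Proof.
move=> nuv hv.
split; first by split; [exact: connT2 | exact: bridgesB2].
have [a0 C0] := C_cc oT.
have hK := card_K ends eSB; rewrite (negbTE nuv) in hK.
have nu0 : connect RS u a0 = false.
  apply/negbTE/negP => hu0; move: hK.
  rewrite (cc_eq hu0) -C0 cT => h.
  have h0 : #|comp_edges ends S0 (cc ends S0 v)| = 0 by lia.
  by rewrite h0 in hv.
have count_away a : ~~ connect RS u a ->
    #|comp_edges G' S2 (cc G' S2 (inl a))| = #|comp_edges ends S (cc ends S a)|.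
  move=> na; rewrite countB2_inl (ce_away eSB na).
  have -> : connect R0 a v = false.
    apply/negbTE/negP => hav; move/negP: na; apply.
    apply: connect_trans (connect1 (adj_e ends eSB)) _; rewrite connect_symS.
    exact: conn0S hav.
  by rewrite addn0.
have h1 : #|comp_edges G' S2 (cc G' S2 (inl a0))| = 1.
  by rewrite count_away ?nu0 // -C0.
exists (cc G' S2 (inl a0)); rewrite setCK; split => //.
apply: odd_comps_char; rewrite ?setCK; last by rewrite h1.
  exact: cc_comps.
suff hinl : forall a, odd #|comp_edges G' S2 (cc G' S2 (inl a))| ->
    cc G' S2 (inl a) = cc G' S2 (inl a0).
  case=> [a|i]; first exact: hinl.
  case hi : (val i == 1).
    have -> : cc G' S2 (inr i) = cc G' S2 (inl v).
      apply: cc_eq; rewrite connect_symS B2b hi connect0 //.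
    exact: hinl.
  by rewrite (negbTE (countB2_inr (negbT hi))).
move=> a hodd; case hu: (connect RS u a).
  case hva : (connect R0 v a).
    have cva : cc ends S0 a = cc ends S0 v by apply: cc_eq; rewrite connect_symS.
    move: hodd; rewrite countB2_inl connect_symS hva cva addn1 /=.
    by rewrite hv.
  have hua : connect R0 u a by move: hu; rewrite (K_split ends eSB) hva orbF.
  have cua : cc ends S0 a = cc ends S0 u by apply: cc_eq; rewrite connect_symS.
  move: hodd; rewrite countB2_inl connect_symS hva addn0 cua => hodd.
  have hKC : cc ends S u = C.
    by apply: (odd_cc oT); rewrite hK addn1 /= oddD hv hodd.
  have : connect RS u a0 by apply: cc_eqP; rewrite hKC C0.
  by rewrite nu0.
move: hodd; rewrite count_away ?hu // => /(odd_cc oT); rewrite C0 => /cc_eqP haa0.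
apply: cc_eq; rewrite B2a.
have : a0 \in cc ends S0 a by rewrite (cc_away eSB (negbT hu)) inE.
by rewrite inE.
Qed.

End CaseB.

End Diam.

Theorem lemma5 (V E : finType) (ends : E -> V * V) (e : E) :
  loopless ends -> cubic ends -> has_light_xuong_tree ends ->
  has_light_xuong_tree (dends ends e).
Proof.
move=> _ _ [T [[stT [g [[[r rot hg] maxg] hx]]] [C [oT cT]]]].
rewrite oT cards1 in hx.
have hE : #|E| = #|V| + 2 * g by lia.
have cV : #|(dV V : finType)| = #|V| + 4 by rewrite card_sum card_ord.
have cE : #|(dE e : finType)| = #|E| + 6.
  rewrite card_sum card_sig card_ord.
  have := cardC1 e; rewrite /predC1 => ->.
  have : 0 < #|E| by apply/card_gt0P; exists e.
  lia.
have [T' [stT' [C' [oT' cT']]]] : exists T', @good _ _ ends e T'.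
  case eT : (e \in T).
    by exists (~: Sset e (~: T) [:: 3; 5]); exact: (goodA eT stT oT cT).
  have eT' : e \notin T by rewrite eT.
  case hB : (connect (adj ends (~: T :\ e)) (ends e).1 (ends e).2 ||
             ~~ odd #|comp_edges ends (~: T :\ e) (cc ends (~: T :\ e) (ends e).2)|).
    by exists (~: Sset e (~: T) [:: 0; 4; 6]); exact: (goodB1 eT' stT oT cT hB).
  exists (~: Sset e (~: T) [:: 1; 2; 6]); move/norP: hB => [h1 h2].
  by apply: (goodB2 eT' stT oT cT h1); rewrite -(negbK (odd _)).
exists T'; split; last by exists C'.
split => //; exists g.+1; split; last by rewrite oT' cards1 cV cE; lia.
split.
  exists (r' e r); first exact: rot_r'.
  rewrite /has_genus nfaces_r' cV cE; move: hg; rewrite /has_genus; lia.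
move=> r2 g2 rot2; rewrite /has_genus cV cE => h2.
have : 0 < nfaces r2.
  apply/fcard_gt0P.
  - by move=> x y /perm_inj /flip_inj.
  - by move=> x y _; rewrite !inE.
  by exists (inr (@Ordinal 7 0 isT), true).
lia.
Qed.
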